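(* Let $K$ be a skew field with center $P$ and an involution, $\mathcal C$ a linear category over $P$ with involution, and $A$ a selfadjoint, direct-sum-indecomposable representation of $\mathcal C$ over $K$. Then $A$ is congruent to a representation $B^f$, where $B\in\operatorname{ind}_0(\mathcal C)$ and $f=f^\circ\in\operatorname{Aut}(B)$.
   Context: $K$ has an involution $a\mapsto\bar a$. Linear category over $P$: $P$-vector-space Hom sets, bilinear composition; involution on it: $u\mapsto u^*$, $(\alpha:u\to v)\mapsto(\alpha^*:v^*\to u^* )$, $u^{**}=u\ne u^*$, $\alpha^{**}=\alpha$, $(\alpha\beta)^*=\beta^*\alpha^*$, $(\alpha a)^*=\alpha^*\bar a$. Representations: functors to finite-dimensional right $K$-spaces, finite total dimension, preserving $P$-linear combinations; morphisms: natural transformations. $V^*$: semilinear forms, $A^*\varphi=\varphi A$, $V^{**}=V$. $A^\circ_u=(A_{u^*})^*$, $A^\circ_\alpha=(A_{\alpha^*})^*$, $f^\circ_u=(f_{u^*})^*$. Selfadjoint: $A=A^\circ$; congruence: isomorphism $\varphi$ of selfadjoint representations with $\varphi^\circ=\varphi^{-1}$. Fix a partition of objects into $S_0$, $S_0^*$. For selfadjoint $B$ and automorphism $f=f^\circ$: $\tilde f_v=f_v$, $\tilde f_{v^*}=1$ ($v\in S_0$), $B^f_v=B_v$, $B^f_\alpha=\tilde f_v^{-1}B_\alpha\tilde f_u$ for $\alpha:u\to v$. $\operatorname{ind}_0(\mathcal C)$: from a complete set of pairwise nonisomorphic indecomposable representations, take those isomorphic to a selfadjoint representation, each replaced by a selfadjoint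 representation isomorphic to it. *)

(* Defs.v *)
From HB Require Import structures.
From mathcomp Require Import all_boot all_algebra.
Set Implicit Arguments. Unset Strict Implicit. Unset Printing Implicit Defensive.
Import GRing.Theory.
Local Open Scope ring_scope.

Definition skew_field (K : unitRingType) : Prop :=
  (1 : K) != 0 /\ forall x : K, x != 0 -> x \is a GRing.unit.

Definition is_involution (K : unitRingType) (cj : K -> K) : Prop :=
  [/\ forall x y, cj (x + y) = cj x + cj y,
      forall x y, cj (x * y) = cj y * cj x &
      forall x, cj (cj x) = x].

Definition central (K : unitRingType) (a : K) : Prop := forall y : K, a * y = y * a.

(* Scalars of P act on Hom-sets via [hsc]; only central scalars matter:
   every axiom/usage of [hsc] is restricted to central elements. *)
Record LinCatInv (K : unitRingType) := {
  Ob : Type;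
  Hom : Ob -> Ob -> zmodType;
  hsc : forall u v, Hom u v -> K -> Hom u v;
  comp : forall u v w, Hom v w -> Hom u v -> Hom u w;
  idm : forall u, Hom u u;
  ostar : Ob -> Ob;
  mstar : forall u v, Hom u v -> Hom (ostar v) (ostar u)
}.

Arguments Ob {K} l.
Arguments Hom {K} l.
Arguments hsc {K} l {u v}.
Arguments comp {K} l {u v w}.
Arguments idm {K} l u.
Arguments ostar {K} l.
Arguments mstar {K} l {u v}.

Definition is_lincatinv (K : unitRingType) (cj : K -> K) (C : LinCatInv K) : Prop :=
  (forall u v (x y : Hom C u v) a, central a -> hsc C (x + y) a = hsc C x a + hsc C y a) /\
  (forall u v (x : Hom C u v) a b, central a -> central b ->
      hsc C x (a + b) = hsc C x a + hsc C x b) /\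
  (forall u v (x : Hom C u v) a b, central a -> central b ->
      hsc C (hsc C x a) b = hsc C x (a * b)) /\
  (forall u v (x : Hom C u v), hsc C x 1 = x) /\
  (forall u v w z (x : Hom C w z) (y : Hom C v w) (t : Hom C u v),
      comp C x (comp C y t) = comp C (comp C x y) t) /\
  (forall u v (x : Hom C u v), comp C (idm C v) x = x /\ comp C x (idm C u) = x) /\
  (forall u v w (x x' : Hom C v w) (y : Hom C u v), comp C (x + x') y = comp C x y + comp C x' y) /\
  (forall u v w (x : Hom C v w) (y y' : Hom C u v), comp C x (y + y') = comp C x y + comp C x y') /\
  (forall u v w (x : Hom C v w) (y : Hom C u v) a, central a ->
      comp C (hsc C x a) y = hsc C (comp C x y) a /\ comp C x (hsc C y a) = hsc C (comp C x y) a) /\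
  (forall u, ostar C (ostar C u) = u) /\
  (forall u, ostar C u <> u) /\
  (forall u v (x y : Hom C u v), mstar C (x + y) = mstar C x + mstar C y) /\
  (forall u v (x : Hom C u v) a, central a -> mstar C (hsc C x a) = hsc C (mstar C x) (cj a)) /\
  (forall u v w (x : Hom C v w) (y : Hom C u v), mstar C (comp C x y) = comp C (mstar C y) (mstar C x)) /\
  (* alpha^** = alpha (as a dependent equality, since u^** = u only propositionally) *)
  (forall u v (x : Hom C u v),
      existT (fun p : Ob C * Ob C => (Hom C p.1 p.2 : Type))
             (ostar C (ostar C u), ostar C (ostar C v)) (mstar C (mstar C x))
      = existT (fun p : Ob C * Ob C => (Hom C p.1 p.2 : Type)) (u, v) x).

(* ---------- representations (in coordinates: V_u = K^(dim u), columns;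
   linear maps K^n -> K^m of right K-spaces = m x n matrices acting on the left) *)
Record rep (K : unitRingType) (C : LinCatInv K) := Rep {
  rdim : Ob C -> nat;
  rmat : forall u v, Hom C u v -> 'M[K]_(rdim v, rdim u)
}.
Arguments rdim {K C}.
Arguments rmat {K C} r {u v}.

Definition is_rep (K : unitRingType) (C : LinCatInv K) (A : rep C) : Prop :=
  (exists (n : nat) (g : 'I_n -> Ob C), forall u, (0 < rdim A u)%N -> exists i, g i = u) /\
  (forall u v w (x : Hom C v w) (y : Hom C u v), rmat A (comp C x y) = rmat A x *m rmat A y) /\
  (forall u, rmat A (idm C u) = 1%:M) /\
  (forall u v (x y : Hom C u v), rmat A (x + y) = rmat A x + rmat A y) /\
  (forall u v (x : Hom C u v) a, central a -> rmat A (hsc C x a) = rmat A x *m a%:M).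

Definition is_morph (K : unitRingType) (C : LinCatInv K) (A B : rep C)
    (f : forall u, 'M[K]_(rdim B u, rdim A u)) : Prop :=
  forall u v (x : Hom C u v), f v *m rmat A x = rmat B x *m f u.

Arguments is_morph {K C} A B f.

Definition are_inverse (K : unitRingType) (C : LinCatInv K) (A B : rep C)
    (f : forall u, 'M[K]_(rdim B u, rdim A u)) (g : forall u, 'M[K]_(rdim A u, rdim B u)) : Prop :=
  forall u, f u *m g u = 1%:M /\ g u *m f u = 1%:M.

Arguments are_inverse {K C A B} f g.

Definition iso (K : unitRingType) (C : LinCatInv K) (A B : rep C) : Prop :=
  exists f g, is_morph A B f /\ are_inverse f g.

Arguments iso {K C} A B.

Definition dsum (K : unitRingType) (C : LinCatInv K) (A B : rep C) : rep C :=
  @Rep K C (fun u => (rdim A u + rdim B u)%N)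
    (fun u v x => block_mx (rmat A x) 0 0 (rmat B x)).

Arguments dsum {K C} A B.

Definition nonzero (K : unitRingType) (C : LinCatInv K) (A : rep C) : Prop :=
  exists u, (0 < rdim A u)%N.

Arguments nonzero {K C} A.

Definition indecomposable (K : unitRingType) (C : LinCatInv K) (A : rep C) : Prop :=
  is_rep A /\ nonzero A /\
  forall B1 B2 : rep C, is_rep B1 -> is_rep B2 -> nonzero B1 -> nonzero B2 ->
    ~ iso A (dsum B1 B2).

Arguments indecomposable {K C} A.
Arguments is_rep {K C} A.

(* ---------- duality: the dual of a matrix is its conjugate transpose ---------- *)
Definition adj (K : unitRingType) (cj : K -> K) m n (M : 'M[K]_(m, n)) : 'M[K]_(n, m) :=
  \matrix_(i, j) cj (M j i).

Definition mget (K : unitRingType) m n (M : 'M[K]_(m, n)) (i j : nat) : K :=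
  match (insub i : option 'I_m), (insub j : option 'I_n) with
  | Some i', Some j' => M i' j'
  | _, _ => 0
  end.

Definition mxeq (K : unitRingType) m n m' n' (M : 'M[K]_(m, n)) (N : 'M[K]_(m', n')) : Prop :=
  m = m' /\ n = n' /\ forall i j : nat, mget M i j = mget N i j.

Definition selfadjoint (K : unitRingType) (cj : K -> K) (C : LinCatInv K) (A : rep C) : Prop :=
  (forall u, rdim A (ostar C u) = rdim A u) /\
  (forall u v (x : Hom C u v), mxeq (rmat A x) (adj cj (rmat A (mstar C x)))).

Definition congruent (K : unitRingType) (cj : K -> K) (C : LinCatInv K) (A B : rep C) : Prop :=
  selfadjoint cj A /\ selfadjoint cj B /\
  exists (phi : forall u, 'M[K]_(rdim B u, rdim A u)) (psi : forall u, 'M[K]_(rdim A u, rdim B u)),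
    is_morph A B phi /\ are_inverse phi psi /\
    forall u, mxeq (adj cj (phi (ostar C u))) (psi u).

Definition selfadj_aut (K : unitRingType) (cj : K -> K) (C : LinCatInv K) (B : rep C)
    (f g : forall u, 'M[K]_(rdim B u, rdim B u)) : Prop :=
  is_morph B B f /\ are_inverse f g /\
  forall u, mxeq (adj cj (f (ostar C u))) (f u).

Definition S0_partition (K : unitRingType) (C : LinCatInv K) (S0 : Ob C -> bool) : Prop :=
  forall u, S0 (ostar C u) = ~~ S0 u.

(* B^f, where g = f^{-1}:  f~_v = f_v, f~_{v*} = 1 for v in S0 *)
Definition twist (K : unitRingType) (C : LinCatInv K) (S0 : Ob C -> bool) (B : rep C)
    (f g : forall u, 'M[K]_(rdim B u, rdim B u)) : rep C :=
  @Rep K C (rdim B)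
    (fun u v x => (if S0 v then g v else 1%:M) *m rmat B x *m (if S0 u then f u else 1%:M)).

(* ind_0(C): obtained from a complete set of pairwise nonisomorphic indecomposables by
   keeping those isomorphic to a selfadjoint rep, each replaced by a selfadjoint one. *)
Definition is_ind0 (K : unitRingType) (cj : K -> K) (C : LinCatInv K) (ind0 : rep C -> Prop) : Prop :=
  (forall B, ind0 B -> indecomposable B /\ selfadjoint cj B) /\
  (forall B1 B2, ind0 B1 -> ind0 B2 -> iso B1 B2 -> B1 = B2) /\
  (forall A, indecomposable A -> (exists S, is_rep S /\ selfadjoint cj S /\ iso A S) ->
     exists B, ind0 B /\ iso A B).

Arguments selfadjoint {K} cj {C} A.
Arguments congruent {K} cj {C} A B.
Arguments selfadj_aut {K} cj {C} B f g.
Arguments S0_partition {K C} S0.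
Arguments twist {K C} S0 B f g.
Arguments is_ind0 {K} cj {C} ind0.
Arguments adj {K} cj {m n} M.
Arguments mxeq {K m n m' n'} M N.

(* Main.v *)
Require Import Defs.
From HB Require Import structures.
From mathcomp Require Import all_boot all_algebra.
Set Implicit Arguments. Unset Strict Implicit. Unset Printing Implicit Defensive.
Import GRing.Theory.
Local Open Scope ring_scope.

Lemma cj0 (K : unitRingType) (cj : K -> K) : is_involution cj -> cj 0 = 0.
Proof.
case=> hadd _ _; have := hadd 0 0; rewrite addr0.
by move/(congr1 (fun z => z - cj 0)); rewrite addrK subrr.
Qed.

Lemma cj1 (K : unitRingType) (cj : K -> K) : is_involution cj -> cj 1 = 1.
Proof.
case=> _ hmul hK; have := hmul (cj 1) 1; rewrite mulr1 hK.
move=> h; rewrite mulr1 in h; by rewrite -h.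
Qed.

Lemma adjmxM (K : unitRingType) (cj : K -> K) m n p (M : 'M[K]_(m,n)) (N : 'M[K]_(n,p)) :
  is_involution cj -> adj cj (M *m N) = adj cj N *m adj cj M.
Proof.
move=> hcj; have [hadd hmul _] := hcj.
apply/matrixP => i j; rewrite !mxE.
rewrite (big_morph cj hadd (cj0 hcj)); apply: eq_bigr => k _.
by rewrite hmul !mxE.
Qed.

Lemma adjmxK (K : unitRingType) (cj : K -> K) m n (M : 'M[K]_(m,n)) :
  is_involution cj -> adj cj (adj cj M) = M.
Proof. by case=> _ _ hK; apply/matrixP => i j; rewrite !mxE hK. Qed.

Lemma adjmx1 (K : unitRingType) (cj : K -> K) n :
  is_involution cj -> adj cj (1%:M : 'M[K]_n) = 1%:M.
Proof.
move=> hcj; apply/matrixP => i j; rewrite !mxE.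
by rewrite [j == i]eq_sym; case: (i == j); rewrite /= ?(cj1 hcj) ?(cj0 hcj).
Qed.

Lemma mgetE (K : unitRingType) m n (M : 'M[K]_(m,n)) (i : 'I_m) (j : 'I_n) :
  mget M i j = M i j.
Proof. by rewrite /mget !valK. Qed.

Lemma mxeq_eq (K : unitRingType) m n (M N : 'M[K]_(m,n)) : mxeq M N -> M = N.
Proof. by move=> [_ [_ h]]; apply/matrixP => i j; have := h i j; rewrite !mgetE. Qed.

Lemma mxeq_refl (K : unitRingType) m n (M : 'M[K]_(m,n)) : mxeq M M.
Proof. by []. Qed.

Lemma eq_mxeq (K : unitRingType) m n (M N : 'M[K]_(m,n)) : M = N -> mxeq M N.
Proof. by move=> ->. Qed.

Lemma mxeq_sym (K : unitRingType) m n m' n' (M : 'M[K]_(m,n)) (N : 'M[K]_(m',n')) :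
  mxeq M N -> mxeq N M.
Proof. by move=> [e1 [e2 h]]; split; [|split] => //. Qed.

Lemma mxeq_trans (K : unitRingType) m n m' n' m'' n'' (M : 'M[K]_(m,n))
  (N : 'M[K]_(m',n')) (P : 'M[K]_(m'',n'')) : mxeq M N -> mxeq N P -> mxeq M P.
Proof.
move=> [e1 [e2 h]] [e3 [e4 h']]; split; [|split]; first by rewrite e1.
  by rewrite e2. by move=> i j; rewrite h h'.
Qed.

Lemma mxeq_mul (K : unitRingType) m n p m' n' p' (M : 'M[K]_(m,n)) (N : 'M[K]_(n,p))
  (M' : 'M[K]_(m',n')) (N' : 'M[K]_(n',p')) :
  mxeq M M' -> mxeq N N' -> mxeq (M *m N) (M' *m N').
Proof.
move=> h1 h2; have [e1 [e2 _]] := h1; have [_ [e4 _]] := h2.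
subst m' n' p'.
by rewrite (mxeq_eq h1) (mxeq_eq h2).
Qed.

Lemma mxeq_adj (K : unitRingType) (cj : K -> K) m n m' n' (M : 'M[K]_(m,n)) (N : 'M[K]_(m',n')) :
  mxeq M N -> mxeq (adj cj M) (adj cj N).
Proof.
move=> h; have [e1 [e2 _]] := h; subst m' n'.
by rewrite (mxeq_eq h).
Qed.

Lemma mxeq_dep (K : unitRingType) (T : Type) (d1 d2 : T -> nat)
  (F : forall w, 'M[K]_(d1 w, d2 w)) w w' : w = w' -> mxeq (F w) (F w').
Proof. by move=> ->. Qed.

Lemma mxeq_1 (K : unitRingType) n n' : n = n' -> mxeq (1%:M : 'M[K]_n) (1%:M : 'M[K]_n').
Proof. by move=> ->. Qed.

Definition mxreshape (K : unitRingType) m' n' m n (M : 'M[K]_(m,n)) : 'M[K]_(m',n') :=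
  \matrix_(i, j) mget M i j.

Lemma mxeq_mxreshape (K : unitRingType) m' n' m n (M : 'M[K]_(m,n)) :
  m = m' -> n = n' -> mxeq (mxreshape m' n' M) M.
Proof.
move=> e1 e2; subst m' n'; apply: eq_mxeq; apply/matrixP => i j.
by rewrite mxE mgetE.
Qed.
Theorem lemma4 (K : unitRingType) (cj : K -> K) (C : LinCatInv K)
    (S0 : Ob C -> bool) (ind0 : rep C -> Prop) (A : rep C) :
  skew_field K -> is_involution cj -> is_lincatinv cj C ->
  S0_partition S0 -> is_ind0 cj ind0 ->
  selfadjoint cj A -> indecomposable A ->
  exists (B : rep C) (f g : forall u, 'M[K]_(rdim B u, rdim B u)),
    ind0 B /\ selfadj_aut cj B f g /\ congruent cj A (twist S0 B f g).
Proof.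
move=> hK hcj hC hS0 hind hA hindA.
have ostarK : forall u, ostar C (ostar C u) = u := hC.2.2.2.2.2.2.2.2.2.1.
have hrepA : is_rep A := hindA.1.
have [B [hB isoAB]] : exists B, ind0 B /\ iso A B.
  apply: hind.2.2 => //; exists A; split => //; split => //.
  exists (fun u => 1%:M), (fun u => 1%:M); split.
    by move=> u v x; rewrite mul1mx mulmx1.
  by move=> u; rewrite mulmx1.
have hBs := (hind.1 B hB).2.
have hAs := hA.
case: isoAB => phi [psi [mphi invp]].
case: hA => dA eA; case: hBs => dB eB.
pose phiO := fun u => @mxreshape K (rdim A u) (rdim B u) _ _ (adj cj (phi (ostar C u))).
pose psiO := fun u => @mxreshape K (rdim B u) (rdim A u) _ _ (adj cj (psi (ostar C u))).
have phiOE u : mxeq (phiO u) (adj cj (phi (ostar C u))).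
  by apply: mxeq_mxreshape; rewrite ?dA ?dB.
have psiOE u : mxeq (psiO u) (adj cj (psi (ostar C u))).
  by apply: mxeq_mxreshape; rewrite ?dA ?dB.
have phiOpsiO u : phiO u *m psiO u = 1%:M.
  apply: mxeq_eq; apply: mxeq_trans (mxeq_mul (phiOE u) (psiOE u)) _.
  rewrite -adjmxM // (invp (ostar C u)).2 (adjmx1 _ hcj); exact: mxeq_1.
have psiOphiO u : psiO u *m phiO u = 1%:M.
  apply: mxeq_eq; apply: mxeq_trans (mxeq_mul (psiOE u) (phiOE u)) _.
  rewrite -adjmxM // (invp (ostar C u)).1 (adjmx1 _ hcj); exact: mxeq_1.
have mphiO u v (x : Defs.Hom C u v) : phiO v *m rmat B x = rmat A x *m phiO u.
  apply: mxeq_eq.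
  apply: mxeq_trans (mxeq_mul (phiOE v) (eB u v x)) _.
  rewrite -adjmxM // -mphi adjmxM //.
  exact: mxeq_mul (mxeq_sym (eA u v x)) (mxeq_sym (phiOE u)).
pose f := fun u => phi u *m phiO u.
pose g := fun u => psiO u *m psi u.
have fg u : f u *m g u = 1%:M.
  by rewrite /f /g mulmxA -(mulmxA (phi u)) phiOpsiO mulmx1 (invp u).1.
have gf u : g u *m f u = 1%:M.
  by rewrite /f /g mulmxA -(mulmxA (psiO u)) (invp u).2 mulmx1 psiOphiO.
have mf u v (x : Defs.Hom C u v) : f v *m rmat B x = rmat B x *m f u.
  by rewrite /f -mulmxA mphiO !mulmxA mphi.
have fsa u : mxeq (adj cj (f (ostar C u))) (f u).
  rewrite /f adjmxM //.
  apply: mxeq_mul; last exact: mxeq_sym (phiOE u).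
  apply: mxeq_trans (mxeq_adj cj (phiOE (ostar C u))) _.
  rewrite adjmxK //; exact: mxeq_dep (ostarK u).
pose G := fun u => if S0 u then g u else 1%:M.
pose F := fun u => if S0 u then f u else 1%:M.
have FG u : F u *m G u = 1%:M by rewrite /F /G; case: (S0 u); rewrite ?mulmx1.
have GF u : G u *m F u = 1%:M by rewrite /F /G; case: (S0 u); rewrite ?mulmx1.
pose chi := fun u => G u *m phi u.
pose chii := fun u => psi u *m F u.
pose T := twist S0 B f g.
have rT u v (x : Defs.Hom C u v) : rmat T x = G v *m rmat B x *m F u by [].
have mchi : is_morph A T chi.
  move=> u v x; rewrite rT /chi -!mulmxA mphi; congr (_ *m _).
  by rewrite !mulmxA -(mulmxA _ (F u)) FG mulmx1.
have ichi : are_inverse chi chii.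
  move=> u; rewrite /chi /chii; split.
    by rewrite mulmxA -(mulmxA (G u)) (invp u).1 mulmx1 GF.
  by rewrite mulmxA -(mulmxA (psi u)) FG mulmx1 (invp u).2.
have cong u : mxeq (adj cj (chi (ostar C u))) (chii u).
  rewrite /chi /chii /G /F hS0; case: (S0 u) => /=.
    rewrite mul1mx mulmxA (invp u).2 mul1mx; exact: mxeq_sym (phiOE u).
  rewrite mulmx1 /g -mulmxA (invp (ostar C u)).2 mulmx1.
  apply: mxeq_trans (mxeq_adj cj (psiOE (ostar C u))) _.
  rewrite adjmxK //; exact: mxeq_dep (ostarK u).
have tw u v (x : Defs.Hom C u v) : rmat T x = chi v *m rmat A x *m chii u.
  by rewrite (mchi u v x) -mulmxA (ichi u).1 mulmx1.
exists B, f, g; split => //; split.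
  split => //; split => // u; exact: (conj (fg u) (gf u)).
split => //; split.
  split => // u v x; rewrite (tw _ _ (mstar C x)).
  rewrite (adjmxM (chi (ostar C u) *m rmat A (mstar C x)) (chii (ostar C v)) hcj).
  rewrite (adjmxM (chi (ostar C u)) (rmat A (mstar C x)) hcj) tw mulmxA.
  apply: mxeq_mul; first apply: mxeq_mul.
  - apply: mxeq_trans (mxeq_dep chi (esym (ostarK v))) _.
    apply: mxeq_trans _ (mxeq_adj cj (cong (ostar C v))).
    by rewrite adjmxK.
  - exact: eA.
  - exact: mxeq_sym (cong u).
by exists chi, chii.
Qed.
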